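(* With $\chi=1$ the trivial character, the restriction maps $j_1:\mathcal S^*(\overline{\mathcal O}_1)^{\chi}\to\mathcal S^*(\mathcal O_1)^{\chi}$ and $j_1':\mathcal S^*(\overline{\mathcal O}_1)^{\chi,\infty}\to\mathcal S^*(\mathcal O_1)^{\chi,\infty}$ are isomorphisms.
   Context: $F$ nonarchimedean local field of characteristic $0$, $G=G'=\mathrm{GL}_2(F)$ acting on $M_2:=M_{2\times2}(F)$ by $(g_1,g_2)\cdot M=g_1Mg_2^{-1}$. Let $\mathcal O_i\subset M_2$ be the set of matrices of rank $i$; $\overline{\mathcal O}_1=\mathcal O_1\cup\{0\}$. For a $G\times G'$-stable locally closed $X\subset M_2$, $\mathcal S(X)$ is the space of locally constant compactly supported functions on $X$ with $((g_1,g_2)f)(M)=f(g_1^{-1}Mg_2)$, and $\mathcal S^*(X)$ is its algebraic dual with the contragredient action. For a character $\chi$ of $G$, $\mathcal S^*(X)^\chi$ is the space of $G$-invariant vectors in $\mathcal S^*(X)\otimes(|\det|\boxtimes|\det|^{-1})\otimes\chi^{-1}$ (here $G$ is the first factor). A vector $v$ in a representation $V$ of $G$ is generalized $\chi$-invariant if there is $k\ge0$ with $(g_0-\chi(g_0))(g_1-\chi(g_1))\cdots(g_k-\chi(g_k))v=0$ for all $g_0,\dots,g_k\in G$; $\mathcal S^*(X)^{\chi,\infty}$ is the space of generalized $(G,\chi)$-invariant vectors in $\mathcal S^*(X)\otimes(|\det|\boxtimes|\det|^{-1})$. The maps $j_1,j_1'$ are induced by restriction of distributions from the closed set $\overline{\mathcal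 O}_1$ to its open subset $\mathcal O_1$. *)

(* Defs.v *)
From HB Require Import structures.
From mathcomp Require Import all_boot all_order all_algebra.
From mathcomp Require Import complex.
From mathcomp Require Import Rstruct.
Set Implicit Arguments. Unset Strict Implicit. Unset Printing Implicit Defensive.
Import Order.TTheory GRing.Theory Num.Theory.
Local Open Scope ring_scope.

Notation RR := Rdefinitions.R.
Notation CC := (complex RR).

(* [is_nalf F nabs] : F is a nonarchimedean local field of characteristic 0
   and [nabs] is its normalized absolute value: a discrete, nontrivial,
   ultrametric absolute value for which F is complete, with finite residue
   field of cardinality q, normalized so that |uniformizer| = q^-1. *)
Definition cauchy_seq (F : fieldType) (nabs : F -> RR) (u : nat -> F) :=
  forall e : RR, 0 < e -> exists N : nat, forall m n, (N <= m)%N -> (N <= n)%N ->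
    nabs (u m - u n) < e.
Definition converges_to (F : fieldType) (nabs : F -> RR) (u : nat -> F) l :=
  forall e : RR, 0 < e -> exists N : nat, forall n, (N <= n)%N -> nabs (u n - l) < e.

Definition is_nalf (F : fieldType) (nabs : F -> RR) : Prop :=
  [/\ [pchar F] =i pred0,
      (nabs 0 = 0 /\ forall x, x != 0 -> 0 < nabs x),
      ((forall x y, nabs (x * y) = nabs x * nabs y) /\
       (forall x y, nabs (x + y) <= Num.max (nabs x) (nabs y))),
      (forall u, cauchy_seq nabs u -> exists l, converges_to nabs u l) &
      exists (pi : F) (q : nat), [/\ (1 < q)%N,
        nabs pi = (q%:R)^-1,
        (forall x, x != 0 -> exists n : int, nabs x = nabs pi ^ n) &
        (* residue field {|x| <= 1} / {|x| < 1} has exactly q elements *)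
        exists s : seq F, [/\ size s = q,
          all (fun r => nabs r <= 1) s,
          (forall i j, (i < q)%N -> (j < q)%N -> i != j ->
              nabs (nth 0 s i - nth 0 s j) = 1) &
          (forall x, nabs x <= 1 -> exists2 r, r \in s & nabs (x - r) < 1)]]].

Section Dist.
Variables (F : fieldType) (nabs : F -> RR).

Definition M2 := 'M[F]_2.

(* max-norm on M_2(F); it induces the usual topology *)
Definition mnorm (M : M2) : RR :=
  \big[Num.max/0]_(i < 2) \big[Num.max/0]_(j < 2) nabs (M i j).

Definition O1 : M2 -> Prop := fun M => \rank M = 1%N.
Definition O1bar : M2 -> Prop := fun M => (\rank M <= 1)%N.

(* sequential compactness (= compactness in the metric space M_2(F)) *)
Definition seq_compact (K : M2 -> Prop) : Prop :=
  forall u : nat -> M2, (forall n, K (u n)) ->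
    exists (phi : nat -> nat) (L : M2),
      [/\ (forall n, (phi n < phi n.+1)%N), K L &
          forall e : RR, 0 < e -> exists N : nat, forall n, (N <= n)%N ->
            mnorm (u (phi n) - L) < e].

(* S(X): locally constant compactly supported C-valued functions on X,
   represented as functions on M_2(F) vanishing outside X *)
Definition is_S (X : M2 -> Prop) (f : M2 -> CC) : Prop :=
  [/\ (forall M, ~ X M -> f M = 0),
      (forall M, X M -> exists2 e : RR, 0 < e &
          forall N, X N -> mnorm (N - M) < e -> f N = f M) &
      exists K : M2 -> Prop, [/\ seq_compact K, (forall M, K M -> X M) &
          forall M, X M -> f M != 0 -> K M]].

(* elements of the algebraic dual S^*(X): maps on functions, linear on S(X);
   two of them are the same element of S^*(X) iff they agree on S(X) *)
Definition is_dual (X : M2 -> Prop) (xi : (M2 -> CC) -> CC) : Prop :=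
  forall (a : CC) f g, is_S X f -> is_S X g ->
    xi (fun M => a * f M + g M) = a * xi f + xi g.

Definition dual_eq (X : M2 -> Prop) (xi eta : (M2 -> CC) -> CC) : Prop :=
  forall f, is_S X f -> xi f = eta f.

(* action of g in G (first factor) on S^*(X) (x) (|det| [x] |det|^-1):
   (g.f)(M) = f(g^-1 M), contragredient (g.xi)(f) = xi(g^-1.f),
   twisted by |det g|. *)
Definition act (g : M2) (xi : (M2 -> CC) -> CC) : (M2 -> CC) -> CC :=
  fun f => (real_complex RR (nabs (\det g))) * xi (fun M => f (g *m M)).

Definition act_m1 (g : M2) (xi : (M2 -> CC) -> CC) : (M2 -> CC) -> CC :=
  fun f => act g xi f - xi f.

(* S^*(X)^chi for chi = 1: G-invariant vectors *)
Definition inv_triv (X : M2 -> Prop) (xi : (M2 -> CC) -> CC) : Prop :=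
  is_dual X xi /\ forall g : M2, g \in unitmx -> dual_eq X (act g xi) xi.

(* S^*(X)^{chi,infty} for chi = 1: generalized invariant vectors *)
Definition gen_inv_triv (X : M2 -> Prop) (xi : (M2 -> CC) -> CC) : Prop :=
  is_dual X xi /\ exists k : nat, forall gs : seq M2,
    size gs = k.+1 -> all (fun g => g \in unitmx) gs ->
    dual_eq X (foldr act_m1 xi gs) (fun _ => 0).

End Dist.

(* the restriction map S^*((@O1bar F)) -> S^*(O1) (extension by zero
   S(O1) -> S((@O1bar F)) dualized) restricted to a subspace P, is bijective
   onto the corresponding subspace (it is obviously linear). *)
Definition restr_bij (F : fieldType) (nabs : F -> RR) (P : (M2 F -> Prop) -> ((M2 F -> CC) -> CC) -> Prop) : Prop :=
  (forall xi eta, P (@O1bar F) xi -> P (@O1bar F) eta ->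
      dual_eq nabs (@O1 F) xi eta -> dual_eq nabs (@O1bar F) xi eta) /\
  (forall xi, P (@O1bar F) xi -> P (@O1 F) xi) /\
  (forall eta, P (@O1 F) eta -> exists2 xi, P (@O1bar F) xi & dual_eq nabs (@O1 F) xi eta).

(* Main.v *)
Require Import Defs.
From HB Require Import structures.
From mathcomp Require Import all_boot all_order all_algebra.
From mathcomp Require Import complex.
From mathcomp Require Import Rstruct.
From mathcomp Require Import ring lra.
From Stdlib Require Import Classical FunctionalExtensionality IndefiniteDescription.
Set Implicit Arguments. Unset Strict Implicit. Unset Printing Implicit Defensive.
Import Order.TTheory GRing.Theory Num.Theory.
Local Open Scope ring_scope.


Definition nabs_ok (F : fieldType) (nabs : F -> RR) :=
  [/\ nabs 0 = 0, (forall x, x != 0 -> 0 < nabs x),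
      (forall x y, nabs (x * y) = nabs x * nabs y) &
      (forall x y, nabs (x + y) <= Num.max (nabs x) (nabs y))].

Lemma nabs_ge0 F nabs (Hn : @nabs_ok F nabs) x : 0 <= nabs x.
Proof.
case: Hn => H0 Hp _ _; have [->|/Hp/ltW //] := eqVneq x 0; by rewrite H0.
Qed.

Lemma nabs1 F nabs (Hn : @nabs_ok F nabs) : nabs 1 = 1.
Proof.
case: Hn => H0 Hp HM _.
have h1 := Hp 1 (oner_neq0 F).
have := HM 1 1; rewrite mulr1 => e.
have : nabs 1 * (nabs 1 - 1) = 0 by rewrite mulrBr mulr1 -e subrr.
move/eqP; rewrite mulf_eq0 => /orP[/eqP h|]; first by move: h1; rewrite h ltxx.
by rewrite subr_eq0 => /eqP.
Qed.

Lemma nabsN F nabs (Hn : @nabs_ok F nabs) x : nabs (- x) = nabs x.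
Proof.
have Hn' := Hn; case: Hn' => H0 Hp HM _.
suff e : nabs (-1) = 1 by rewrite -mulN1r HM e mul1r.
have h1 : 0 < nabs (-1) by apply: Hp; rewrite oppr_eq0 oner_neq0.
have := HM (-1) (-1); rewrite mulrNN mulr1 (nabs1 Hn) => e.
have : (nabs (-1) - 1) * (nabs (-1) + 1) = 0.
  by rewrite mulrDr mulr1 mulrBl mul1r -e; ring.
move/eqP; rewrite mulf_eq0 => /orP[|/eqP h]; first by rewrite subr_eq0 => /eqP.
have : 0 < nabs (-1) + 1 by apply: addr_gt0.
by rewrite h ltxx.
Qed.

Lemma mnorm_ge_entry (F : fieldType) (nabs : F -> RR) (M : M2 F) i j :
  nabs (M i j) <= mnorm nabs M.
Proof. rewrite /mnorm. apply: le_trans (le_bigmax _ _ i). exact: le_bigmax. Qed.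

Lemma mnorm_le (F : fieldType) (nabs : F -> RR) (M : M2 F) r :
  0 <= r -> (forall i j, nabs (M i j) <= r) -> mnorm nabs M <= r.
Proof.
move=> r0 h; rewrite /mnorm.
apply: bigmax_le => // i _; apply: bigmax_le => // j _; exact: h.
Qed.

Lemma mnorm_ge0 F nabs (Hn : @nabs_ok F nabs) (M : M2 F) : 0 <= mnorm nabs M.
Proof. exact: le_trans (nabs_ge0 Hn (M 0 0)) (mnorm_ge_entry _ _ _ _). Qed.

Lemma mnormN F nabs (Hn : @nabs_ok F nabs) (M : M2 F) : mnorm nabs (- M) = mnorm nabs M.
Proof.
apply/le_anti/andP; split; apply: mnorm_le; try exact: mnorm_ge0.
- move=> i j; rewrite mxE nabsN //; exact: mnorm_ge_entry.
- move=> i j; have -> : M i j = - ((- M) i j) by rewrite mxE opprK.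
  rewrite nabsN //; exact: mnorm_ge_entry.
Qed.

Lemma mnormD F nabs (Hn : @nabs_ok F nabs) (A B : M2 F) :
  mnorm nabs (A + B) <= Num.max (mnorm nabs A) (mnorm nabs B).
Proof.
apply: mnorm_le; first by rewrite le_max mnorm_ge0.
move=> i j; rewrite mxE; case: Hn => _ _ _ HU; apply: le_trans (HU _ _) _.
by rewrite ge_max !le_max !mnorm_ge_entry //= orbT.
Qed.

Lemma mnormM F nabs (Hn : @nabs_ok F nabs) (A B : M2 F) :
  mnorm nabs (A *m B) <= mnorm nabs A * mnorm nabs B.
Proof.
apply: mnorm_le; first by rewrite mulr_ge0 ?mnorm_ge0.
move=> i j; rewrite mxE !big_ord_recr big_ord0 /= add0r.
have Hn' := Hn; case: Hn' => _ _ HM HU; apply: le_trans (HU _ _) _.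
rewrite ge_max !HM; apply/andP; split;
  apply: ler_pM; rewrite ?nabs_ge0 ?mnorm_ge_entry //.
Qed.

Lemma mnorm_gt0 F nabs (Hn : @nabs_ok F nabs) (M : M2 F) : M != 0 -> 0 < mnorm nabs M.
Proof.
move=> nz; have [i [j hij]] : exists i j, M i j != 0.
  apply/not_all_not_ex => h; move/negP: nz; apply; apply/eqP/matrixP => i j.
  rewrite mxE; case: (eqVneq (M i j) 0) => // hn; case: (h i); exists j; done.
apply: lt_le_trans (mnorm_ge_entry _ M i j); case: Hn => _ Hp _ _; exact: Hp.
Qed.

Lemma lip F nabs (Hn : @nabs_ok F nabs) (A : M2 F) (e : RR) : 0 < e ->
  exists2 d : RR, 0 < d & forall B, mnorm nabs B < d -> mnorm nabs (A *m B) < e.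
Proof.
move=> e0; set c := mnorm nabs A + 1.
have c0 : 0 < c by rewrite /c ltr_wpDl ?mnorm_ge0.
exists (e / c); first by rewrite divr_gt0.
move=> B hB; apply: le_lt_trans (mnormM Hn A B) _.
apply: le_lt_trans (_ : _ <= c * mnorm nabs B) _.
  by rewrite ler_wpM2r ?mnorm_ge0 // /c lerDl.
by rewrite -(ltr_pM2l c0) mulrCA divff ?mulr1 ?gt_eqF // in hB.
Qed.

Lemma rank_unitM (F : fieldType) (g M : M2 F) : g \in unitmx -> \rank (g *m M) = \rank M.
Proof. by move=> hg; rewrite (eqmxMfull M (_ : row_full g)) // row_full_unit. Qed.

Definition Xstable (F : fieldType) (X : M2 F -> Prop) :=
  forall g M, g \in unitmx -> X (g *m M) <-> X M.

Lemma O1_stable (F : fieldType) : Xstable (@O1 F).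
Proof. by move=> g M hg; rewrite /O1 rank_unitM. Qed.
Lemma O1bar_stable (F : fieldType) : Xstable (@O1bar F).
Proof. by move=> g M hg; rewrite /O1bar rank_unitM. Qed.

Lemma is_S_comp F nabs (Hn : @nabs_ok F nabs) X (HX : Xstable X) (g : M2 F) f :
  g \in unitmx -> is_S nabs X f -> is_S nabs X (fun M => f (g *m M)).
Proof.
move=> hg [Hv Hc [K [HK HKX HKs]]]; split.
- by move=> M hM; apply: Hv => /(HX _ _ hg).
- move=> M hM; have hgM : X (g *m M) by apply/(HX _ _ hg).
  case: (Hc _ hgM) => e e0 he.
  case: (lip Hn g e0) => d d0 hd; exists d => // N hN hNM.
  apply: he; first by apply/(HX _ _ hg).
  by rewrite -mulmxBr; apply: hd.
- exists (fun M => K (g *m M)); split.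
  + move=> u hu; case: (HK (fun n => g *m u n) hu) => phi [L [hphi hL hconv]].
    exists phi, (invmx g *m L); split => //.
      by rewrite mulmxA mulmxV // mul1mx.
    move=> e e0; case: (lip Hn (invmx g) e0) => d d0 hd.
    case: (hconv d d0) => N hN; exists N => n hn.
    have -> : u (phi n) - invmx g *m L = invmx g *m (g *m u (phi n) - L).
      by rewrite mulmxBr mulmxA mulVmx // mul1mx.
    exact/hd/hN.
  + by move=> M /HKX /(HX _ _ hg).
  + by move=> M hM hf; apply: HKs => //; apply/(HX _ _ hg).
Qed.

Lemma incr_lt (f : nat -> nat) : (forall n, f n < f n.+1)%N ->
  forall m n, (m < n)%N -> (f m < f n)%N.
Proof.
move=> hf m; elim=> // n IH; rewrite ltnS leq_eqVlt => /orP[/eqP->|/IH h] //.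
exact: ltn_trans h (hf n).
Qed.

Lemma sub_inf (P : nat -> Prop) : (forall N, exists n, (N <= n)%N /\ P n) ->
  exists psi : nat -> nat, (forall n, psi n < psi n.+1)%N /\ forall n, P (psi n).
Proof.
move=> H; pose sel N := proj1_sig (constructive_indefinite_description _ (H N)).
have hs N : (N <= sel N)%N /\ P (sel N) by exact: proj2_sig (constructive_indefinite_description _ (H N)).
exists (fun n => iter n (fun m => sel m.+1) (sel 0)); split.
  by move=> n /=; case: (hs (iter n (fun m => sel m.+1) (sel 0)).+1).
by case=> [|n] /=; [case: (hs 0) | case: (hs (iter n (fun m => sel m.+1) (sel 0)).+1)].
Qed.

Lemma seq_compactU (F : fieldType) nabs (K1 K2 : M2 F -> Prop) :
  seq_compact nabs K1 -> seq_compact nabs K2 -> seq_compact nabs (fun M => K1 M \/ K2 M).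
Proof.
move=> H1 H2 u hu.
case: (classic (forall N, exists n, (N <= n)%N /\ K1 (u n))) => [hinf|hfin].
- case: (sub_inf hinf) => psi [hpsi hK].
  case: (H1 (fun n => u (psi n)) hK) => phi [L [hphi hL hc]].
  exists (fun n => psi (phi n)), L; split => //; [|by left].
  by move=> n; apply: incr_lt.
- have [N hN] : exists N, forall n, (N <= n)%N -> K2 (u n).
    apply: NNPP => hn; apply: hfin => N; apply: NNPP => h; apply: hn; exists N => n hn.
    case: (hu n) => // h1; case: h; exists n; done.
  case: (H2 (fun n => u (n + N)%N)) => [n|phi [L [hphi hL hc]]]; first by apply: hN; rewrite leq_addl.
  exists (fun n => phi n + N)%N, L; split => //; [|by right].
  by move=> n; rewrite ltn_add2r.
Qed.

Lemma is_S_lin F nabs X (a : CC) (f g : M2 F -> CC) :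
  is_S nabs X f -> is_S nabs X g -> is_S nabs X (fun M => a * f M + g M).
Proof.
move=> [Hv1 Hc1 [K1 [HK1 HX1 Hs1]]] [Hv2 Hc2 [K2 [HK2 HX2 Hs2]]]; split.
- by move=> M hM; rewrite Hv1 // Hv2 // mulr0 addr0.
- move=> M hM; case: (Hc1 _ hM) => e1 e10 h1; case: (Hc2 _ hM) => e2 e20 h2.
  exists (Num.min e1 e2); first by rewrite lt_min e10 e20.
  by move=> N hN; rewrite lt_min => /andP[n1 n2]; rewrite h1 // h2.
- exists (fun M => K1 M \/ K2 M); split.
  + exact: seq_compactU.
  + by move=> M [/HX1|/HX2].
  + move=> M hM hne; case: (eqVneq (f M) 0) => hf; last by left; apply: Hs1.
    case: (eqVneq (g M) 0) => hg; last by right; apply: Hs2.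
    by move: hne; rewrite hf hg mulr0 addr0 eqxx.
Qed.

Lemma is_S_zero F nabs X : is_S nabs X (fun _ : M2 F => 0).
Proof.
split => //; first by move=> M _; exists 1.
exists (fun _ => False); split => //; first by move=> u hu; case: (hu 0%N).
by move=> M _; rewrite eqxx.
Qed.

Lemma O1bar_cases (F : fieldType) (M : M2 F) : O1bar M -> O1 M \/ M = 0.
Proof.
rewrite /O1bar /O1 leq_eqVlt ltnS leqn0 => /orP[/eqP->|]; first by left.
by rewrite mxrank_eq0 => /eqP ->; right.
Qed.
Lemma O1_O1bar (F : fieldType) (M : M2 F) : O1 M -> O1bar M.
Proof. by rewrite /O1 /O1bar => ->. Qed.
Lemma O1bar0 (F : fieldType) : O1bar (0 : M2 F).
Proof. by rewrite /O1bar mxrank0. Qed.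
Lemma not_O1_0 (F : fieldType) : ~ O1 (0 : M2 F).
Proof. by rewrite /O1 mxrank0. Qed.
Lemma O1_neq0 (F : fieldType) (M : M2 F) : O1 M -> M != 0.
Proof. by move=> h; apply/eqP => e; move: h; rewrite e; apply: not_O1_0. Qed.

Lemma is_S_b0 F nabs (w : M2 F -> CC) :
  is_S nabs (@O1bar F) w -> w 0 = 0 -> is_S nabs (@O1 F) w.
Proof.
move=> [Hv Hc [K [HK HKX HKs]]] w0; split.
- move=> M hM; case: (classic (O1bar M)) => h; last exact: Hv.
  by case: (O1bar_cases h) => // ->.
- move=> M /O1_O1bar /Hc [e e0 he]; exists e => // N /O1_O1bar; exact: he.
- exists (fun M => K M /\ w M != 0); split.
  + move=> u hu; case: (HK u (fun n => proj1 (hu n))) => phi [L [hphi hL hc]].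
    exists phi, L; split => //; split => //.
    case: (Hc L (HKX _ hL)) => e e0 he; case: (hc e e0) => N hN.
    rewrite -(he (u (phi N))); [exact: proj2 (hu _)|exact: HKX (proj1 (hu _))|exact: hN].
  + move=> M [hK hw]; case: (O1bar_cases (HKX _ hK)) => // e.
    by move: hw; rewrite e w0 eqxx.
  + by move=> M hM hw; split => //; apply: HKs => //; apply: O1_O1bar.
Qed.

Lemma incr_ge (phi : nat -> nat) : (forall n, phi n < phi n.+1)%N -> forall n, (n <= phi n)%N.
Proof. move=> h; elim=> // n IH; exact: leq_ltn_trans IH (h n). Qed.

Lemma is_S_a F nabs (Hn : @nabs_ok F nabs) (f : M2 F -> CC) :
  is_S nabs (@O1 F) f -> is_S nabs (@O1bar F) f.
Proof.
move=> [Hv Hc [K [HK HKX HKs]]].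
have f0 : f 0 = 0 by apply: Hv; apply: not_O1_0.
have hO1 N : f N != 0 -> O1 N.
  by move=> hN; apply: NNPP => h; move: hN; rewrite Hv // eqxx.
have near0 : exists2 e0 : RR, 0 < e0 & forall N, mnorm nabs N < e0 -> f N = 0.
  apply: NNPP => hne.
  have hx : forall n : nat, exists N, mnorm nabs N < (n.+1%:R)^-1 /\ f N != 0.
    move=> n; apply: NNPP => h; apply: hne; exists (n.+1%:R)^-1; first by rewrite invr_gt0 ltr0Sn.
    move=> N hN; apply/eqP; apply: NNPP => hf; apply: h; exists N; split => //.
    exact/negP.
  pose u n := proj1_sig (constructive_indefinite_description _ (hx n)).
  have hu n : mnorm nabs (u n) < (n.+1%:R)^-1 /\ f (u n) != 0.
    exact: proj2_sig (constructive_indefinite_description _ (hx n)).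
  case: (HK u (fun n => HKs _ (hO1 _ (proj2 (hu n))) (proj2 (hu n)))) => phi [L [hphi hL hc]].
  have m0 := mnorm_gt0 Hn (O1_neq0 (HKX _ hL)).
  case: (hc _ m0) => N0 hN0.
  have mi : 0 <= (mnorm nabs L)^-1 by rewrite invr_ge0 ltW.
  have hb := archi_boundP mi.
  set n := maxn N0 (Num.Def.archi_bound (mnorm nabs L)^-1).
  have h1 := hN0 n (leq_maxl _ _).
  have h2 : mnorm nabs (u (phi n)) < mnorm nabs L.
    apply: lt_le_trans (proj1 (hu _)) _.
    rewrite -[X in _ <= X]invrK lef_pV2 ?posrE ?invr_gt0 ?ltr0Sn //.
    apply: le_trans (ltW hb) _; rewrite ler_nat; apply: leqW.
    exact: leq_trans (leq_maxr _ _) (incr_ge hphi n).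
  have e : L = - (u (phi n) - L) + u (phi n) by rewrite opprB subrK.
  have h3 := mnormD Hn (- (u (phi n) - L)) (u (phi n)); rewrite -e mnormN // in h3.
  have h4 : Num.max (mnorm nabs (u (phi n) - L)) (mnorm nabs (u (phi n))) < mnorm nabs L.
    by rewrite gt_max h1 h2.
  by have := le_lt_trans h3 h4; rewrite ltxx.
case: near0 => e0 e00 he0; split => //.
- by move=> M hM; apply: Hv => /O1_O1bar.
- move=> M hM; case: (O1bar_cases hM) => [hM1|->].
  + case: (Hc _ hM1) => e e1 he; exists (Num.min e (mnorm nabs M)).
      by rewrite lt_min e1 mnorm_gt0 // O1_neq0.
    move=> N hN; rewrite lt_min => /andP[hNe hNM].
    case: (O1bar_cases hN) => [hN1|eN]; first exact: he.
    by move: hNM; rewrite eN sub0r mnormN // ltxx.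
  + exists e0 => // N _; rewrite subr0 f0; exact: he0.
- exists K; split => //; first by move=> M /HKX /O1_O1bar.
  by move=> M _ hf; apply: HKs; [exact: hO1 | exact: hf].
Qed.


Definition chi (F : fieldType) (nabs : F -> RR) (g : M2 F) : CC :=
  real_complex RR (nabs (\det g)).

Lemma act_m1E F nabs (g : M2 F) x f :
  act_m1 nabs g x f = chi nabs g * x (fun M => f (g *m M)) - x f.
Proof. by []. Qed.

Lemma dual_eq_trans F nabs X (x y w : (M2 F -> CC) -> CC) :
  dual_eq nabs X x y -> dual_eq nabs X y w -> dual_eq nabs X x w.
Proof. by move=> h1 h2 f hf; rewrite h1 // h2. Qed.

Lemma resp_m1 F nabs (Hn : @nabs_ok F nabs) X (HX : Xstable X) g x y :
  g \in unitmx -> dual_eq nabs X x y -> dual_eq nabs X (act_m1 nabs g x) (act_m1 nabs g y).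
Proof.
move=> hg h f hf; by rewrite !act_m1E (h f hf) (h _ (is_S_comp Hn HX hg hf)).
Qed.

Lemma dual_m1 F nabs (Hn : @nabs_ok F nabs) X (HX : Xstable X) g x :
  g \in unitmx -> is_dual nabs X x -> is_dual nabs X (act_m1 nabs g x).
Proof.
move=> hg h a f1 f2 h1 h2; rewrite !act_m1E /=.
rewrite (h a (fun M => f1 (g *m M)) (fun M => f2 (g *m M))) ?h //; try exact: is_S_comp.
ring.
Qed.

Lemma dual_comb F nabs X (x y : (M2 F -> CC) -> CC) (c : CC) :
  is_dual nabs X x -> is_dual nabs X y -> is_dual nabs X (fun f => x f - c * y f).
Proof. by move=> hx hy a f g hf hg; rewrite hx // hy //; ring. Qed.

Lemma m1_comb F nabs (g : M2 F) x y (c : CC) :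
  act_m1 nabs g (fun f => x f - c * y f) = fun f => act_m1 nabs g x f - c * act_m1 nabs g y f.
Proof. by apply: functional_extensionality => f; rewrite !act_m1E; ring. Qed.

Lemma foldr_comb F nabs (gs : seq (M2 F)) x y (c : CC) :
  foldr (act_m1 nabs) (fun f => x f - c * y f) gs =
  fun f => foldr (act_m1 nabs) x gs f - c * foldr (act_m1 nabs) y gs f.
Proof. by elim: gs => //= g gs ->; rewrite m1_comb. Qed.

Lemma m1_comm F nabs (Hn : @nabs_ok F nabs) (z g : M2 F) x :
  (forall A : M2 F, A *m z = z *m A) ->
  act_m1 nabs z (act_m1 nabs g x) = act_m1 nabs g (act_m1 nabs z x).
Proof.
move=> hz; apply: functional_extensionality => f; rewrite !act_m1E.
have -> : (fun M => f (z *m (g *m M))) = (fun M => f (g *m (z *m M))).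
  by apply: functional_extensionality => M; rewrite !mulmxA hz.
ring.
Qed.

Lemma iter_m1_comm F nabs (Hn : @nabs_ok F nabs) (z g : M2 F) n x :
  (forall A : M2 F, A *m z = z *m A) ->
  iter n (act_m1 nabs z) (act_m1 nabs g x) = act_m1 nabs g (iter n (act_m1 nabs z) x).
Proof. by move=> hz; elim: n => //= n ->; rewrite m1_comm. Qed.

Lemma foldr_iter_comm F nabs (Hn : @nabs_ok F nabs) (z : M2 F) n x gs :
  (forall A : M2 F, A *m z = z *m A) ->
  foldr (act_m1 nabs) (iter n (act_m1 nabs z) x) gs =
  iter n (act_m1 nabs z) (foldr (act_m1 nabs) x gs).
Proof. by move=> hz; elim: gs => //= g gs ->; rewrite iter_m1_comm. Qed.

Lemma foldr_nseq F nabs (z : M2 F) n x :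
  foldr (act_m1 nabs) x (nseq n z) = iter n (act_m1 nabs z) x.
Proof. by elim: n => //= n ->. Qed.

Lemma iter_resp F nabs (Hn : @nabs_ok F nabs) X (HX : Xstable X) z n x y :
  z \in unitmx -> dual_eq nabs X x y ->
  dual_eq nabs X (iter n (act_m1 nabs z) x) (iter n (act_m1 nabs z) y).
Proof. by move=> hz h; elim: n => //= n IH; apply: resp_m1. Qed.

Lemma iter_dual F nabs (Hn : @nabs_ok F nabs) X (HX : Xstable X) z n x :
  z \in unitmx -> is_dual nabs X x -> is_dual nabs X (iter n (act_m1 nabs z) x).
Proof. by move=> hz h; elim: n => //= n IH; apply: dual_m1. Qed.

Lemma foldr_resp F nabs (Hn : @nabs_ok F nabs) X (HX : Xstable X) gs x y :
  all (fun g => g \in unitmx) gs -> dual_eq nabs X x y ->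
  dual_eq nabs X (foldr (act_m1 nabs) x gs) (foldr (act_m1 nabs) y gs).
Proof.
move=> ha h; elim: gs ha => //= g gs IH /andP[hg ha]; apply: resp_m1 => //; exact: IH.
Qed.

Lemma foldr_dual F nabs (Hn : @nabs_ok F nabs) X (HX : Xstable X) gs x :
  all (fun g => g \in unitmx) gs -> is_dual nabs X x -> is_dual nabs X (foldr (act_m1 nabs) x gs).
Proof.
move=> ha h; elim: gs ha => //= g gs IH /andP[hg ha]; apply: dual_m1 => //; exact: IH.
Qed.

Lemma iter_delta F nabs (z : M2 F) n (m : CC) :
  iter n (act_m1 nabs z) (fun u => u 0 * m) = fun u => u 0 * ((chi nabs z - 1) ^+ n * m).
Proof.
elim: n => [|n IH] /=; first by apply: functional_extensionality => u; rewrite expr0 mul1r.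
rewrite IH; apply: functional_extensionality => u; rewrite act_m1E mulmx0 exprS; ring.
Qed.


Definition Phi (F : fieldType) (h0 : M2 F -> CC) (zeta : (M2 F -> CC) -> CC) (m : CC) :
  (M2 F -> CC) -> CC := fun u => zeta (fun M => u M - u 0 * h0 M) + u 0 * m.

Lemma is_S_sub F nabs X (a : CC) (f g : M2 F -> CC) :
  is_S nabs X f -> is_S nabs X g -> is_S nabs X (fun M => f M - a * g M).
Proof.
move=> hf hg; have := is_S_lin (- a) hg hf.
have -> : (fun M => - a * g M + f M) = (fun M => f M - a * g M) by
  apply: functional_extensionality => M; ring.
done.
Qed.

Lemma is_S_dev F nabs (Hn : @nabs_ok F nabs) (h0 u : M2 F -> CC) :
  is_S nabs (@O1bar F) h0 -> h0 0 = 1 -> is_S nabs (@O1bar F) u ->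
  is_S nabs (@O1 F) (fun M => u M - u 0 * h0 M).
Proof.
move=> hh h1 hu; apply: is_S_b0; first exact: is_S_sub.
by rewrite h1 mulr1 subrr.
Qed.

Lemma S_vanish0 F nabs (u : M2 F -> CC) : is_S nabs (@O1 F) u -> u 0 = 0.
Proof. by case=> Hv _ _; apply: Hv; apply: not_O1_0. Qed.

Lemma Phi_dual F nabs (Hn : @nabs_ok F nabs) h0 zeta m :
  is_S nabs (@O1bar F) h0 -> h0 0 = 1 -> is_dual nabs (@O1 F) zeta ->
  is_dual nabs (@O1bar F) (Phi h0 zeta m).
Proof.
move=> hh h1 hz a f g hf hg; rewrite /Phi.
have -> : (fun M => a * f M + g M - (a * f 0 + g 0) * h0 M) =
          (fun M => a * (f M - f 0 * h0 M) + (g M - g 0 * h0 M)).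
  by apply: functional_extensionality => M; ring.
rewrite hz; try exact: is_S_dev.
ring.
Qed.

Lemma Phi_O1 F nabs h0 zeta :
  dual_eq nabs (@O1 F) (Phi h0 zeta 0) zeta.
Proof.
move=> u hu; rewrite /Phi (S_vanish0 hu) mul0r addr0.
congr zeta; apply: functional_extensionality => M; ring.
Qed.

Lemma Phi_step F nabs (Hn : @nabs_ok F nabs) h0 zeta m (g : M2 F) :
  is_S nabs (@O1bar F) h0 -> h0 0 = 1 -> is_dual nabs (@O1 F) zeta -> g \in unitmx ->
  dual_eq nabs (@O1bar F) (act_m1 nabs g (Phi h0 zeta m))
    (Phi h0 (act_m1 nabs g zeta)
       (chi nabs g * zeta (fun M => h0 (g *m M) - 1 * h0 M) + (chi nabs g - 1) * m)).
Proof.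
move=> hh h1 hz hg u hu; rewrite act_m1E /Phi act_m1E mulmx0 /=.
have hug := is_S_comp Hn (@O1bar_stable F) hg hu.
have hhg := is_S_comp Hn (@O1bar_stable F) hg hh.
have e : (fun M => u (g *m M) - u 0 * h0 M) =
   (fun M => u 0 * (h0 (g *m M) - 1 * h0 M) + (u (g *m M) - u 0 * h0 (g *m M))).
  by apply: functional_extensionality => M; ring.
rewrite e hz.
- ring.
- apply: is_S_b0; first exact: is_S_sub.
  by rewrite mulmx0 h1 mul1r subrr.
- apply: is_S_b0; first exact: is_S_sub.
  by rewrite mulmx0 h1 mulr1 subrr.
Qed.

Lemma Phi_fold F nabs (Hn : @nabs_ok F nabs) h0 zeta m gs :
  is_S nabs (@O1bar F) h0 -> h0 0 = 1 -> is_dual nabs (@O1 F) zeta ->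
  all (fun g => g \in unitmx) gs ->
  exists m', dual_eq nabs (@O1bar F) (foldr (act_m1 nabs) (Phi h0 zeta m) gs)
                (Phi h0 (foldr (act_m1 nabs) zeta gs) m').
Proof.
move=> hh h1 hz; elim: gs => [|g gs IH] /=; first by exists m.
case/andP=> hg ha; case: (IH ha) => m1 h.
eexists; apply: (dual_eq_trans (resp_m1 Hn (@O1bar_stable F) hg h)).
apply: Phi_step => //; exact: (foldr_dual Hn (@O1_stable F) ha hz).
Qed.

Lemma Phi_vanish F nabs (Hn : @nabs_ok F nabs) h0 zeta m :
  is_S nabs (@O1bar F) h0 -> h0 0 = 1 -> dual_eq nabs (@O1 F) zeta (fun _ => 0) ->
  dual_eq nabs (@O1bar F) (Phi h0 zeta m) (fun u => u 0 * m).
Proof.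
move=> hh h1 hz u hu; rewrite /Phi hz ?add0r //; exact: is_S_dev.
Qed.


Lemma h0_cases F nabs :
  (exists h0, is_S nabs (@O1bar F) h0 /\ h0 0 = 1) \/
  (forall u, is_S nabs (@O1bar F) u -> u 0 = 0).
Proof.
case: (classic (exists u, is_S nabs (@O1bar F) u /\ u 0 != 0)) => [[u [hu hu0]]|hn].
- left; exists (fun M => (u 0)^-1 * u M + 0); split.
    exact: is_S_lin hu (is_S_zero _ _).
  by rewrite addr0 mulVf.
- right => u hu; apply/eqP; apply: NNPP => h; apply: hn; exists u; split => //; exact/negP.
Qed.

Lemma inj_core F nabs (Hn : @nabs_ok F nabs) (z : M2 F) n x :
  z \in unitmx -> chi nabs z != 1 ->
  is_dual nabs (@O1bar F) x -> dual_eq nabs (@O1 F) x (fun _ => 0) ->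
  dual_eq nabs (@O1bar F) (iter n (act_m1 nabs z) x) (fun _ => 0) ->
  dual_eq nabs (@O1bar F) x (fun _ => 0).
Proof.
move=> hz hc hx h1 hit.
case: (@h0_cases F nabs) => [[h0 [hh h01]]|hno]; last first.
  move=> u hu; apply: h1; apply: is_S_b0 => //; exact: hno.
have hd : dual_eq nabs (@O1bar F) x (fun u => u 0 * x h0).
  move=> u hu.
  have e : u = (fun M => u 0 * h0 M + (u M - u 0 * h0 M)).
    by apply: functional_extensionality => M; ring.
  rewrite {1}e hx //; last exact: is_S_sub.
  rewrite (h1 _ (is_S_dev Hn hh h01 hu)) /=.
  by rewrite addr0.
have := @iter_resp F nabs Hn _ (@O1bar_stable F) z n _ _ hz hd; rewrite iter_delta => he.
have e1 := he h0 hh; rewrite hit // h01 mul1r in e1.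
move/eqP: e1; rewrite eq_sym mulf_eq0 expf_eq0 subr_eq0 (negPf hc) andbF /= => /eqP e.
by move=> u hu; rewrite hd // e mulr0.
Qed.

Lemma surj_core F nabs (Hn : @nabs_ok F nabs) (z : M2 F) N eta :
  z \in unitmx -> chi nabs z != 1 -> (forall A : M2 F, A *m z = z *m A) ->
  is_dual nabs (@O1 F) eta ->
  (forall gs, size gs = N -> all (fun g => g \in unitmx) gs ->
     dual_eq nabs (@O1 F) (foldr (act_m1 nabs) eta gs) (fun _ => 0)) ->
  exists xi, [/\ is_dual nabs (@O1bar F) xi, dual_eq nabs (@O1 F) xi eta &
    forall gs, size gs = N -> all (fun g => g \in unitmx) gs ->
     dual_eq nabs (@O1bar F) (foldr (act_m1 nabs) xi gs) (fun _ => 0)].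
Proof.
move=> hz hc hzc he hN.
case: (@h0_cases F nabs) => [[h0 [hh h01]]|hno]; last first.
  have hS u : is_S nabs (@O1bar F) u -> is_S nabs (@O1 F) u.
    by move=> hu; apply: is_S_b0 => //; exact: hno.
  exists eta; split => //.
  - by move=> a f g hf hg; apply: he; apply: hS.
  - by move=> gs hs ha u hu; apply: hN => //; apply: hS.
set P0 := Phi h0 eta 0.
set c := ((chi nabs z - 1) ^+ N)^-1.
exists (fun f => P0 f - c * iter N (act_m1 nabs z) P0 f).
have hP0 : is_dual nabs (@O1bar F) P0 by apply: Phi_dual.
have hzn : all (fun g => g \in unitmx) (nseq N z).
  by apply/allP => g /nseqP [-> _].
split.
- apply: dual_comb => //; exact: (@iter_dual F nabs Hn _ (@O1bar_stable F) z N _ hz hP0).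
- move=> u hu; rewrite {1}/P0 (@Phi_O1 F nabs h0 eta u hu).
  rewrite (@iter_resp F nabs Hn _ (@O1_stable F) z N _ eta hz (@Phi_O1 F nabs h0 eta)) //.
  rewrite -foldr_nseq hN ?size_nseq // mulr0 subr0 //.
- move=> gs hs ha u hu; rewrite foldr_comb foldr_iter_comm //.
  case: (@Phi_fold F nabs Hn h0 eta 0 gs hh h01 he ha) => m' hm.
  have hv := @Phi_vanish F nabs Hn h0 _ m' hh h01 (hN gs hs ha).
  have h2 := dual_eq_trans hm hv.
  have h3 := @iter_resp F nabs Hn _ (@O1bar_stable F) z N _ _ hz h2.
  rewrite iter_delta in h3.
  rewrite h3 // h2 //.
  have hne : (chi nabs z - 1) ^+ N != 0 by rewrite expf_eq0 subr_eq0 (negPf hc) andbF.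
  rewrite /c; field; done.
Qed.


Lemma nalf_data (F : fieldType) (nabs : F -> RR) : is_nalf nabs ->
  nabs_ok nabs /\ exists z : M2 F, [/\ z \in unitmx, chi nabs z != 1 &
     forall A : M2 F, A *m z = z *m A].
Proof.
case=> _ [H0 Hp] [HM HU] _ [pi [q [hq hpi _ _]]].
have Hn : nabs_ok nabs by split.
split => //.
have q1 : 1 < q%:R :> RR by rewrite ltr1n.
have q0 : 0 < q%:R :> RR by apply: lt_trans q1.
have hpi0 : pi != 0.
  apply/eqP => e; move: hpi; rewrite e H0 => /eqP; rewrite eq_sym invr_eq0.
  by rewrite gt_eqF.
exists (pi%:M); split.
- by rewrite unitmxE det_scalar unitfE expf_neq0.
- rewrite /chi det_scalar expr2 HM hpi; apply/eqP => /complexI e.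
  have h1 : (q%:R :> RR)^-1 < 1 by rewrite invf_lt1.
  have h2 : 0 < (q%:R :> RR)^-1 by rewrite invr_gt0.
  have : (q%:R :> RR)^-1 * (q%:R)^-1 < 1.
    by apply: le_lt_trans (h1); rewrite ger_pMr // (ltW h1).
  by rewrite e ltxx.
- by move=> A; rewrite mul_mx_scalar mul_scalar_mx.
Qed.

Lemma inv_m1 F nabs X (x : (M2 F -> CC) -> CC) :
  inv_triv nabs X x <-> is_dual nabs X x /\
    forall g, g \in unitmx -> dual_eq nabs X (act_m1 nabs g x) (fun _ => 0).
Proof.
split=> [[hd hi]|[hd hi]]; split => // g hg f hf.
- by rewrite /act_m1 (hi g hg f hf) subrr.
- by apply/eqP; rewrite -subr_eq0; apply/eqP; exact: (hi g hg f hf).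
Qed.

Lemma iter_zero F nabs (z : M2 F) n :
  iter n (act_m1 nabs z) (fun _ => 0) = fun _ => 0.
Proof.
elim: n => //= n ->; apply: functional_extensionality => f.
by rewrite act_m1E mulr0 subrr.
Qed.

Lemma iter_comb F nabs (z : M2 F) n x y (c : CC) :
  iter n (act_m1 nabs z) (fun f => x f - c * y f) =
  fun f => iter n (act_m1 nabs z) x f - c * iter n (act_m1 nabs z) y f.
Proof. by rewrite -!foldr_nseq foldr_comb. Qed.

Lemma dual_O1 F nabs (Hn : @nabs_ok F nabs) x :
  is_dual nabs (@O1bar F) x -> is_dual nabs (@O1 F) x.
Proof. by move=> h a f g hf hg; apply: h; apply: is_S_a. Qed.

Lemma deq_O1 F nabs (Hn : @nabs_ok F nabs) x y :
  dual_eq nabs (@O1bar F) x y -> dual_eq nabs (@O1 F) x y.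
Proof. by move=> h f hf; apply: h; apply: is_S_a. Qed.

Lemma all_nseq_unit (F : fieldType) (z : M2 F) n : z \in unitmx -> all (fun g => g \in unitmx) (nseq n z).
Proof. by move=> hz; apply/allP => g /nseqP [-> _]. Qed.

Unset Implicit Arguments.
Theorem lemma2p4 (F : fieldType) (nabs : F -> Rdefinitions.R) :
  is_nalf nabs ->
  restr_bij nabs (inv_triv nabs) /\ restr_bij nabs (gen_inv_triv nabs).
Proof.
move=> /nalf_data [Hn [z [hz hc hzc]]].
have diff_core n (xi eta : (M2 F -> CC) -> CC) :
    is_dual nabs (@O1bar F) xi -> is_dual nabs (@O1bar F) eta ->
    dual_eq nabs (@O1 F) xi eta ->
    dual_eq nabs (@O1bar F) (iter n (act_m1 nabs z) xi) (fun _ => 0) ->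
    dual_eq nabs (@O1bar F) (iter n (act_m1 nabs z) eta) (fun _ => 0) ->
    dual_eq nabs (@O1bar F) xi eta.
  move=> hx he hxe hix hie.
  have := @inj_core F nabs Hn z n (fun f => xi f - 1 * eta f) hz hc.
  move=> h u hu; apply/eqP; rewrite -subr_eq0 -(mul1r (eta u)); apply/eqP.
  apply: h => //.
  - exact: dual_comb.
  - by move=> f hf /=; rewrite hxe // mul1r subrr.
  - by rewrite iter_comb => f hf; rewrite hix // hie // mulr0 subrr.
split.
- split; [|split].
  + move=> xi eta /inv_m1 [hx hix] /inv_m1 [he hie] hxe.
    apply: (diff_core 1%N) => //=; [exact: hix | exact: hie].
  + move=> xi /inv_m1 [hx hix]; apply/inv_m1; split; first exact: dual_O1.
    by move=> g hg; apply: deq_O1 => //; apply: hix.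
  + move=> eta /inv_m1 [he hie].
    have hN : forall gs, size gs = 1%N -> all (fun g => g \in unitmx) gs ->
        dual_eq nabs (@O1 F) (foldr (act_m1 nabs) eta gs) (fun _ => 0).
      by case=> [|g [|//]] //= _ /andP[hg _]; apply: hie.
    case: (surj_core Hn hz hc hzc he hN) => xi [hx hxe hxi].
    exists xi => //; apply/inv_m1; split => // g hg.
    by apply: (hxi [:: g]) => //=; rewrite hg.
- split; [|split].
  + move=> xi eta [hx [k1 hk1]] [he [k2 hk2]] hxe.
    apply: (diff_core (k1.+1 + k2.+1)%N) => //.
    * rewrite addnC iterD.
      have h := @iter_resp F nabs Hn _ (@O1bar_stable F) z k2.+1 _ _ hz
         (hk1 (nseq k1.+1 z) (size_nseq _ _) (all_nseq_unit _ hz)).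
      by rewrite foldr_nseq in h; move=> f hf; rewrite h // iter_zero.
    * rewrite iterD.
      have h := @iter_resp F nabs Hn _ (@O1bar_stable F) z k1.+1 _ _ hz
         (hk2 (nseq k2.+1 z) (size_nseq _ _) (all_nseq_unit _ hz)).
      by rewrite foldr_nseq in h; move=> f hf; rewrite h // iter_zero.
  + move=> xi [hx [k hk]]; split; first exact: dual_O1.
    by exists k => gs hs ha; apply: deq_O1 => //; apply: hk.
  + move=> eta [he [k hk]].
    case: (surj_core Hn hz hc hzc he hk) => xi [hx hxe hxi].
    by exists xi => //; split => //; exists k.
Qed.
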